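(* Let $n\ge3$, $K\ge1$, and $\underline a=(a_1,\dots,a_K)\in(\mathbb{C}^\times)^K$ with $a_k\neq a_j^{\pm1}$ for all $k\neq j$. If $a_1=1$ and $a_k\neq-1$ for every $k\ge2$, then the image of $\psi_{\underline a}$ is isomorphic to the direct sum of one copy of $sp_{2n}$ and $K-1$ copies of $sl_{2n}$.
   Context: For $n\geq 3$, $M_n=(m_{i,j})$ is the $n\times n$ integer matrix with $m_{i,i}=2$, $m_{i,i+1}=m_{i+1,i}=-1$ ($1\le i\le n-1$), $m_{1,n}=m_{n,1}=1$, all other entries $0$. $\mathrm{gim}(M_n)$ is the complex Lie algebra generated by $e_i,f_i,h_i$ ($1\le i\le n$) with relations: (R1) $[h_i,e_j]=m_{i,j}e_j$, $[h_i,f_j]=-m_{i,j}f_j$, $[e_i,f_i]=h_i$ for all $i,j$; (R2) for $i\ne j$ with $m_{i,j}\le0$: $[e_i,f_j]=0=[f_i,e_j]$, $(\mathrm{ad}\,e_i)^{1-m_{i,j}}e_j=0=(\mathrm{ad}\,f_i)^{1-m_{i,j}}f_j$; (R3) for $i\ne j$ with $m_{i,j}>0$: $[e_i,e_j]=0=[f_i,f_j]$, $(\mathrm{ad}\,e_i)^{m_{i,j}+1}f_j=0=(\mathrm{ad}\,f_i)^{m_{i,j}+1}e_j$. For $a\in\mathbb{C}^\times$, $\psi_a:\mathrm{gim}(M_n)\to sl_{2n}$ is the Lie algebra homomorphism determined by $\psi_a(e_i)=E_{i,i+1}-E_{n+i+1,n+i}$, $\psi_a(f_i)=E_{i+1,i}-E_{n+i,n+i+1}$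 ($1\le i\le n-1$), $\psi_a(e_n)=E_{n,n+1}+a^{-1}E_{1,2n}$, $\psi_a(f_n)=E_{n+1,n}+aE_{2n,1}$, where $E_{i,j}$ are matrix units. For $\underline a=(a_1,\dots,a_K)$, $\psi_{\underline a}=\bigoplus_{k=1}^K\psi_{a_k}:\mathrm{gim}(M_n)\to sl_{2n}^{\oplus K}$, $x\mapsto(\psi_{a_1}(x),\dots,\psi_{a_K}(x))$. *)

(* Defs.v *)
From HB Require Import structures.
From mathcomp Require Import all_boot all_order all_algebra.
From mathcomp Require Import reals.
From mathcomp.real_closed Require Import complex.
Set Implicit Arguments. Unset Strict Implicit. Unset Printing Implicit Defensive.
Import Order.TTheory GRing.Theory Num.Theory.
Local Open Scope ring_scope.

Section LieDefs.
Variable F : fieldType.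

Definition lie (m : nat) (X Y : 'M[F]_m) : 'M[F]_m := X *m Y - Y *m X.

(* Matrix unit E_{i,j}, with 1-based indices i, j (as in the paper). *)
Definition Eunit (m : nat) (i j : nat) : 'M[F]_m :=
  \matrix_(r < m, c < m) ((r.+1 == i) && (c.+1 == j))%:R.

(* The homomorphism psi_a : gim(M_n) -> sl_{2n} on the generators
   (indices i = 1..n); 2n is written n + n. *)
Definition psi_e (n : nat) (a : F) (i : nat) : 'M[F]_(n + n) :=
  if i == n then Eunit _ n n.+1 + a^-1 *: Eunit _ 1 (n + n)
  else Eunit _ i i.+1 - Eunit _ (n + i).+1 (n + i).

Definition psi_f (n : nat) (a : F) (i : nat) : 'M[F]_(n + n) :=
  if i == n then Eunit _ n.+1 n + a *: Eunit _ (n + n) 1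
  else Eunit _ i.+1 i - Eunit _ (n + i) (n + i).+1.

(* psi_a(h_i) = psi_a([e_i,f_i]) = [psi_a(e_i), psi_a(f_i)]. *)
Definition psi_h (n : nat) (a : F) (i : nat) : 'M[F]_(n + n) :=
  lie (psi_e n a i) (psi_f n a i).

Definition lieK (K m : nat) (x y : {ffun 'I_K -> 'M[F]_m}) : {ffun 'I_K -> 'M[F]_m} :=
  [ffun k => lie (x k) (y k)].

Inductive lie_gen (V : lmodType F) (br : V -> V -> V) (S : V -> Prop) : V -> Prop :=
| lie_gen_base x : S x -> lie_gen br S x
| lie_gen_zero : lie_gen br S 0
| lie_gen_add x y : lie_gen br S x -> lie_gen br S y -> lie_gen br S (x + y)
| lie_gen_scale (c : F) x : lie_gen br S x -> lie_gen br S (c *: x)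
| lie_gen_br x y : lie_gen br S x -> lie_gen br S y -> lie_gen br S (br x y).

Definition psiK_gens (n K : nat) (a : 'I_K -> F) (x : {ffun 'I_K -> 'M[F]_(n + n)}) : Prop :=
  exists2 i : nat, (1 <= i <= n)%N &
    [\/ x = [ffun k => psi_e n (a k) i],
        x = [ffun k => psi_f n (a k) i] |
        x = [ffun k => psi_h n (a k) i]].

(* Image of psi_{\underline a}: the Lie subalgebra of sl_{2n}^{(+)K} generated by
   the images of the generators of gim(M_n). *)
Definition psiK_image (n K : nat) (a : 'I_K -> F) : {ffun 'I_K -> 'M[F]_(n + n)} -> Prop :=
  lie_gen (@lieK K (n + n)) (psiK_gens a).

Definition Jsymp (n : nat) : 'M[F]_(n + n) := block_mx 0 1%:M (- 1%:M) 0.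
Definition is_sp (n : nat) (X : 'M[F]_(n + n)) : Prop :=
  X^T *m Jsymp n + Jsymp n *m X = 0.
Definition is_sl (m : nat) (X : 'M[F]_m) : Prop := \tr X = 0.

Definition sp_sl_sum (n K : nat) (z : 'M[F]_(n + n) * {ffun 'I_K.-1 -> 'M[F]_(n + n)}) : Prop :=
  is_sp z.1 /\ forall k, is_sl (z.2 k).
Definition lie_sum (n K : nat) (z w : 'M[F]_(n + n) * {ffun 'I_K.-1 -> 'M[F]_(n + n)}) :=
  (lie z.1 w.1, lieK z.2 w.2).

Definition lie_iso (V W : lmodType F) (brV : V -> V -> V) (brW : W -> W -> W)
  (L : V -> Prop) (M : W -> Prop) : Prop :=
  exists phi : V -> W,
    [/\ forall x, L x -> M (phi x),
        forall (c : F) x y, L x -> L y -> phi (c *: x + y) = c *: phi x + phi y,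
        forall x y, L x -> L y -> phi (brV x y) = brW (phi x) (phi y),
        forall x y, L x -> L y -> phi x = phi y -> x = y &
        forall z, M z -> exists2 x, L x & phi x = z].

End LieDefs.

(* Main.v *)
Require Import Defs.
From HB Require Import structures.
From mathcomp Require Import all_boot all_order all_algebra.
From mathcomp Require Import reals.
From mathcomp.real_closed Require Import complex.
From mathcomp Require Import zify ring.
Set Implicit Arguments. Unset Strict Implicit. Unset Printing Implicit Defensive.
Import Order.TTheory GRing.Theory Num.Theory.
Local Open Scope ring_scope.

Section EU.
Variable F : fieldType.
Local Notation E := (@Eunit F).

Lemma EunitE m i j (r c : 'I_m) : E m i j r c = ((r.+1 == i) && (c.+1 == j))%:R.
Proof. by rewrite /Eunit mxE. Qed.

Lemma Eunit_out m i j : ((i == 0)%N || (m < i)%N || (j == 0)%N || (m < j)%N) -> E m i j = 0.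
Proof.
move=> H; apply/matrixP=> r c; rewrite EunitE mxE.
case: eqP => // Hr; case: eqP => //= Hc.
have := ltn_ord r; have := ltn_ord c; move: H; lia.
Qed.

Lemma Eunit_mul m i j k l :
  E m i j *m E m k l = if (j == k) && (0 < j <= m)%N then E m i l else 0.
Proof.
apply/matrixP=> r c; rewrite mxE.
under eq_bigr => s _ do rewrite !EunitE.
case: ifP => [/andP[/eqP <- Hj]|Hjk].
  rewrite EunitE.
  have Hs : (j.-1 < m)%N by lia.
  rewrite (bigD1 (Ordinal Hs)) //= big1 ?addr0.
    have -> : (j.-1).+1 = j by lia.
    by rewrite eqxx !andbT -natrM mulnb.
  move=> s /eqP Hne; case: (s.+1 =P j) => [Hsj|]; last by rewrite !andbF mul0r.
  by exfalso; apply: Hne; apply: val_inj => /=; lia.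
rewrite mxE big1 // => s _.
case: (s.+1 =P j) => [Hsj|]; last by rewrite !andbF mul0r.
case: (s.+1 =P k) => [Hsk|]; last by rewrite andFb mulr0.
exfalso; move: Hjk; have := ltn_ord s; rewrite Hsj in Hsk; rewrite Hsk eqxx /=; lia.
Qed.

Lemma Eunit_tr m i j : (E m i j)^T = E m j i.
Proof. by apply/matrixP=> r c; rewrite mxE !EunitE andbC. Qed.

Lemma Eunit_block n i j :
  E (n + n) i j = block_mx (E n i j) (E n i (j - n)) (E n (i - n) j) (E n (i - n) (j - n)).
Proof.
apply/matrixP=> r c.
rewrite -(splitK r) -(splitK c).
case: (split r) => r'; case: (split c) => c' /=;
 rewrite ?block_mxEul ?block_mxEur ?block_mxEdl ?block_mxEdr !EunitE /=;
 congr (GRing.natmul _ (nat_of_bool _)); congr andb; apply/eqP/eqP; lia.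
Qed.

End EU.


Section BL.
Variable F : fieldType.
Local Notation E := (@Eunit F).
Variable n : nat.
Definition TR (B : 'M[F]_n) : 'M[F]_(n+n) := block_mx 0 B 0 0.
Definition BL (C : 'M[F]_n) : 'M[F]_(n+n) := block_mx 0 0 C 0.
Definition DG (A D : 'M[F]_n) : 'M[F]_(n+n) := block_mx A 0 0 D.

Ltac kill := repeat match goal with |- context[@Eunit _ ?m ?i ?j] =>
   rewrite (@Eunit_out _ m i j); [|lia] end.

Lemma Eunit_idx m i j i' j' : i = i' -> j = j' -> E m i j = E m i' j'.
Proof. by move=> -> ->. Qed.

Lemma psi_e_lt a i : (1 <= i < n)%N -> psi_e n a i = DG (E n i i.+1) (- E n i.+1 i).
Proof.
move=> Hi; rewrite /psi_e; have -> : (i == n) = false by lia.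
rewrite !Eunit_block /DG opp_block_mx add_block_mx; kill; rewrite ?oppr0 ?addr0 ?add0r.
by rewrite ?addKn -?addnS ?addKn ?subSnn.
Qed.

Lemma psi_f_lt a i : (1 <= i < n)%N -> psi_f n a i = DG (E n i.+1 i) (- E n i i.+1).
Proof.
move=> Hi; rewrite /psi_f; have -> : (i == n) = false by lia.
rewrite !Eunit_block /DG opp_block_mx add_block_mx; kill; rewrite ?oppr0 ?addr0 ?add0r.
by rewrite ?addKn -?addnS ?addKn ?subSnn.
Qed.

Lemma psi_e_n a : (1 <= n)%N -> psi_e n a n = TR (E n n 1 + a^-1 *: E n 1 n).
Proof.
move=> Hn; rewrite /psi_e eqxx.
rewrite !Eunit_block /TR scale_block_mx add_block_mx; kill; rewrite ?scaler0 ?addr0 ?add0r.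
by rewrite ?addKn -?addnS ?addKn ?subSnn.
Qed.

Lemma psi_f_n a : (1 <= n)%N -> psi_f n a n = BL (E n 1 n + a *: E n n 1).
Proof.
move=> Hn; rewrite /psi_f eqxx.
rewrite !Eunit_block /BL scale_block_mx add_block_mx; kill; rewrite ?scaler0 ?addr0 ?add0r.
by rewrite ?addKn -?addnS ?addKn ?subSnn.
Qed.

End BL.


Section Alg.
Variable F : fieldType.
Local Notation E := (@Eunit F).

Lemma lieDl m (c : F) (x y z : 'M[F]_m) : lie (c *: x + y) z = c *: lie x z + lie y z.
Proof. by rewrite /lie mulmxDl mulmxDr -!scalemxAl -!scalemxAr scalerBr opprD addrACA. Qed.
Lemma lieDr m (c : F) (x y z : 'M[F]_m) : lie z (c *: x + y) = c *: lie z x + lie z y.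
Proof. by rewrite /lie mulmxDl mulmxDr -!scalemxAl -!scalemxAr scalerBr opprD addrACA. Qed.
Lemma lieZl m (c : F) (x z : 'M[F]_m) : lie (c *: x) z = c *: lie x z.
Proof. by rewrite /lie -scalemxAl -scalemxAr scalerBr. Qed.
Lemma lieZr m (c : F) (x z : 'M[F]_m) : lie z (c *: x) = c *: lie z x.
Proof. by rewrite /lie -scalemxAl -scalemxAr scalerBr. Qed.
Lemma lieN m (x y : 'M[F]_m) : lie x y = - lie y x.
Proof. by rewrite /lie opprB. Qed.
Lemma lie0l m (x : 'M[F]_m) : lie 0 x = 0.
Proof. by rewrite /lie mul0mx mulmx0 subrr. Qed.
Lemma lie0r m (x : 'M[F]_m) : lie x 0 = 0.
Proof. by rewrite /lie mul0mx mulmx0 subrr. Qed.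

Variable n : nat.
Local Notation TR := (@TR F n).
Local Notation BL := (@BL F n).
Local Notation DG := (@DG F n).

Lemma lie_DG A D A' D' : lie (DG A D) (DG A' D') = DG (lie A A') (lie D D').
Proof.
rewrite /lie /DG !mulmx_block !mulmx0 !mul0mx !addr0 !add0r opp_block_mx add_block_mx.
by rewrite !subrr.
Qed.
Lemma lie_DG_TR A D B : lie (DG A D) (TR B) = TR (A *m B - B *m D).
Proof.
rewrite /lie /DG /TR !mulmx_block !mulmx0 !mul0mx !addr0 !add0r opp_block_mx add_block_mx.
by rewrite !oppr0 !addr0.
Qed.
Lemma lie_DG_BL A D C : lie (DG A D) (BL C) = BL (D *m C - C *m A).
Proof.
rewrite /lie /DG /BL !mulmx_block !mulmx0 !mul0mx !addr0 !add0r opp_block_mx add_block_mx.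
by rewrite !oppr0 !addr0.
Qed.
Lemma lie_TR_BL B C : lie (TR B) (BL C) = DG (B *m C) (- (C *m B)).
Proof.
rewrite /lie /DG /BL /TR !mulmx_block !mulmx0 !mul0mx !addr0 !add0r opp_block_mx add_block_mx.
by rewrite !oppr0 !addr0 !add0r.
Qed.

Lemma TR_lin c B B' : TR (c *: B + B') = c *: TR B + TR B'.
Proof. by rewrite /TR scale_block_mx add_block_mx !scaler0 !addr0. Qed.
Lemma BL_lin c B B' : BL (c *: B + B') = c *: BL B + BL B'.
Proof. by rewrite /BL scale_block_mx add_block_mx !scaler0 !addr0. Qed.
Lemma DG_lin c A D A' D' : DG (c *: A + A') (c *: D + D') = c *: DG A D + DG A' D'.
Proof. by rewrite /DG scale_block_mx add_block_mx !scaler0 !addr0. Qed.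

Lemma block_split A B C D : block_mx A B C D = TR B + BL C + DG A D.
Proof. by rewrite /TR /BL /DG !add_block_mx !addr0 !add0r. Qed.

Lemma sp_block_eq (A B C D : 'M[F]_n) :
  (block_mx A B C D)^T *m Jsymp F n + Jsymp F n *m block_mx A B C D =
  block_mx (C - C^T) (A^T + D) (- D^T - A) (B^T - B).
Proof.
rewrite /Jsymp tr_block_mx !mulmx_block !mulmx0 !mul0mx !addr0 !add0r !mulmx1 !mul1mx.
rewrite !mulmxN !mulNmx !mulmx1 !mul1mx add_block_mx; by congr block_mx; rewrite addrC.
Qed.

Lemma is_sp_block (A B C D : 'M[F]_n) : B^T = B -> C^T = C -> D = - A^T -> is_sp (block_mx A B C D).
Proof.
move=> hB hC hD; rewrite /is_sp sp_block_eq hB hC hD !subrr linearN /= trmxK opprK subrr.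
by rewrite block_mx0.
Qed.

Lemma is_sp_blockE (A B C D : 'M[F]_n) : is_sp (block_mx A B C D) -> [/\ B^T = B, C^T = C & D = - A^T].
Proof.
rewrite /is_sp sp_block_eq -(block_mx0 _ n n n n) => /eq_block_mx [h1 h2 h3 h4].
split; first by apply/eqP; rewrite -subr_eq0 h4.
  by apply/eqP; rewrite eq_sym -subr_eq0 h1.
by apply/eqP; rewrite -addr_eq0 addrC h2.
Qed.

Lemma is_sp_lin c (X Y : 'M[F]_(n+n)) : is_sp X -> is_sp Y -> is_sp (c *: X + Y).
Proof.
rewrite /is_sp => hX hY; rewrite linearD linearZ /= mulmxDl mulmxDr -scalemxAl -scalemxAr.
by rewrite addrACA -scalerDr hX hY scaler0 addr0.
Qed.

Lemma is_sp_lie (X Y : 'M[F]_(n+n)) : is_sp X -> is_sp Y -> is_sp (lie X Y).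
Proof.
rewrite /is_sp /lie => hX hY.
have eX : X^T *m Jsymp F n = - (Jsymp F n *m X) by apply/eqP; rewrite -addr_eq0 hX.
have eY : Y^T *m Jsymp F n = - (Jsymp F n *m Y) by apply/eqP; rewrite -addr_eq0 hY.
rewrite linearB /= !trmx_mul !mulmxBl !mulmxBr -!mulmxA eX eY !mulmxN !mulmxA eX eY.
rewrite !mulNmx !opprK -!mulmxA.
by rewrite addrC subrKA subrr.
Qed.

Lemma is_sl_lin c m (X Y : 'M[F]_m) : is_sl X -> is_sl Y -> is_sl (c *: X + Y).
Proof. by rewrite /is_sl mxtraceD mxtraceZ => -> ->; rewrite mulr0 addr0. Qed.

Lemma is_sl_lie m (X Y : 'M[F]_m) : is_sl (lie X Y).
Proof. by rewrite /is_sl /lie mxtraceD mxtrace_mulC linearN /= subrr. Qed.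

End Alg.


Lemma if_true_eq (T : Type) (b : bool) (x y : T) : b = true -> (if b then x else y) = x.
Proof. by move=> ->. Qed.
Lemma if_false_eq (T : Type) (b : bool) (x y : T) : b = false -> (if b then x else y) = y.
Proof. by move=> ->. Qed.

Ltac emul := repeat match goal with |- context[@Eunit ?F ?m ?i ?j *m @Eunit _ _ ?k ?l] =>
  rewrite (@Eunit_mul F m i j k l);
  first [rewrite (@if_true_eq _ ((j == k) && (0 < j <= m))%N); [|lia]
        |rewrite (@if_false_eq _ ((j == k) && (0 < j <= m))%N); [|lia]] end.

Lemma trD (F : fieldType) m p (A B : 'M[F]_(m,p)) : (A + B)^T = A^T + B^T.
Proof. by apply/matrixP=> i j; rewrite !mxE. Qed.
Lemma trN (F : fieldType) m p (A : 'M[F]_(m,p)) : (- A)^T = - A^T.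
Proof. by apply/matrixP=> i j; rewrite !mxE. Qed.
Lemma trZ (F : fieldType) m p c (A : 'M[F]_(m,p)) : (c *: A)^T = c *: A^T.
Proof. by apply/matrixP=> i j; rewrite !mxE. Qed.
Lemma aux4 (G : zmodType) (x y z w : G) : - x - y - (z + w) = - (x + z) + - (w + y).
Proof. by rewrite !opprD addrACA [- w + _]addrC. Qed.

Section Gen.
Variable F : fieldType.
Local Notation E := (@Eunit F).
Variables (n K : nat) (a : 'I_K -> F).
Hypothesis hn : (3 <= n)%N.
Hypothesis ha0 : forall k, a k != 0.

Local Notation TR := (@TR F n).
Local Notation BL := (@BL F n).
Local Notation DG := (@DG F n).
Local Notation V := {ffun 'I_K -> 'M[F]_(n + n)}.
Local Notation L := (@psiK_image F n K a).
Local Notation lK := (@lieK F K (n + n)).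

Lemma L_add x y : L x -> L y -> L (x + y). Proof. exact: lie_gen_add. Qed.
Lemma L_scale c x : L x -> L (c *: x). Proof. exact: lie_gen_scale. Qed.
Lemma L_br x y : L x -> L y -> L (lK x y). Proof. exact: lie_gen_br. Qed.
Lemma L_0 : L 0. Proof. exact: lie_gen_zero. Qed.
Lemma L_opp x : L x -> L (- x). Proof. by move=> h; rewrite -scaleN1r; apply: L_scale. Qed.
Lemma L_sub x y : L x -> L y -> L (x - y). Proof. by move=> hx hy; apply: L_add => //; apply: L_opp. Qed.
Lemma L_sum (I : finType) (P : pred I) (f : I -> V) : (forall i, P i -> L (f i)) -> L (\sum_(i | P i) f i).
Proof. by move=> h; apply: big_ind => //; [exact: L_0 | exact: L_add]. Qed.
Lemma L_eq x y : x = y -> L x -> L y. Proof. by move=> ->. Qed.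

Definition cst (X : 'M[F]_(n + n)) : V := [ffun => X].

Lemma lK_cst X y : lK (cst X) y = [ffun k => lie X (y k)].
Proof. by apply/ffunP=> k; rewrite !ffunE. Qed.

Lemma gen_e i : (1 <= i <= n)%N -> L [ffun k => psi_e n (a k) i].
Proof. by move=> hi; apply: lie_gen_base; exists i => //; constructor 1. Qed.
Lemma gen_f i : (1 <= i <= n)%N -> L [ffun k => psi_f n (a k) i].
Proof. by move=> hi; apply: lie_gen_base; exists i => //; constructor 2. Qed.

Lemma L_ei i : (1 <= i < n)%N -> L (cst (DG (E n i i.+1) (- E n i.+1 i))).
Proof.
move=> hi; apply: L_eq (gen_e (i:=i) _); last lia.
by apply/ffunP=> k; rewrite !ffunE psi_e_lt.
Qed.
Lemma L_fi i : (1 <= i < n)%N -> L (cst (DG (E n i.+1 i) (- E n i i.+1))).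
Proof.
move=> hi; apply: L_eq (gen_f (i:=i) _); last lia.
by apply/ffunP=> k; rewrite !ffunE psi_f_lt.
Qed.
Lemma L_en : L [ffun k => TR (E n n 1 + (a k)^-1 *: E n 1 n)].
Proof.
apply: L_eq (gen_e (i:=n) _); last lia.
by apply/ffunP=> k; rewrite !ffunE psi_e_n //; lia.
Qed.
Lemma L_fn : L [ffun k => BL (E n 1 n + a k *: E n n 1)].
Proof.
apply: L_eq (gen_f (i:=n) _); last lia.
by apply/ffunP=> k; rewrite !ffunE psi_f_n //; lia.
Qed.

Definition DD p := cst (DG (E n p p) (- E n p p)).

Lemma L_DDdiff i : (1 <= i < n)%N -> L (DD i - DD i.+1).
Proof.
move=> hi; apply: L_eq (L_br (L_ei hi) (L_fi hi)).
rewrite lK_cst; apply/ffunP=> k; rewrite !ffunE lie_DG /lie.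
rewrite !mulmxN !mulNmx !opprK; emul.
rewrite /DG opp_block_mx add_block_mx oppr0 addr0; congr block_mx; by rewrite opprK addrC.
Qed.

Lemma L_DD1n : L (DD 1 + DD n).
Proof.
apply: L_eq (L_br L_en L_fn).
apply/ffunP=> k; rewrite !ffunE lie_TR_BL.
rewrite !mulmxDl !mulmxDr -!scalemxAl -!scalemxAr; emul.
rewrite !scaler0 !addr0 !add0r !scalerA mulVf // ?mulfV // !scale1r.
by rewrite /DG add_block_mx addr0; congr block_mx; rewrite ?opprD addrC.
Qed.


Hypothesis h2 : (2 : F) != 0.

Lemma L_DD1diff p : (1 <= p <= n)%N -> L (DD 1 - DD p).
Proof.
elim: p => [|p IH] hp; first lia.
case: (p =P 0%N) => [->|hp0]; first by rewrite subrr; apply: L_0.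
have -> : DD 1 - DD p.+1 = (DD 1 - DD p) + (DD p - DD p.+1) by rewrite addrA subrK.
by apply: L_add; [apply: IH | apply: L_DDdiff]; lia.
Qed.

Lemma L_DD p : (1 <= p <= n)%N -> L (DD p).
Proof.
move=> hp.
have h1 : L (DD 1).
  have -> : DD 1 = 2^-1 *: ((DD 1 + DD n) + (DD 1 - DD n)).
    by rewrite addrACA subrr addr0 -mulr2n -scaler_nat scalerA mulVf // scale1r.
  by apply: L_scale; apply: L_add; [apply: L_DD1n | apply: L_DD1diff; lia].
have -> : DD p = DD 1 - (DD 1 - DD p) by rewrite opprB addrC subrK.
by apply: L_sub => //; apply: L_DD1diff.
Qed.

Definition Sset (A : 'M[F]_n) := L (cst (DG A (- A^T))).

Lemma S_lin c A B : Sset A -> Sset B -> Sset (c *: A + B).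
Proof.
rewrite /Sset => hA hB; apply: L_eq (L_add (L_scale c hA) hB).
apply/ffunP=> k; rewrite !ffunE -DG_lin; congr DG.
by rewrite linearD linearZ /= opprD scalerN.
Qed.

Lemma S_lie A B : Sset A -> Sset B -> Sset (lie A B).
Proof.
rewrite /Sset => hA hB; apply: L_eq (L_br hA hB).
rewrite lK_cst; apply/ffunP=> k; rewrite !ffunE lie_DG; congr DG.
rewrite /lie !mulmxN !mulNmx !opprK linearB /= !trmx_mul opprB.
by [].
Qed.

Lemma S_E p q : (1 <= p <= n)%N -> (1 <= q <= n)%N -> Sset (E n p q).
Proof.
have Sdiag r : (1 <= r <= n)%N -> Sset (E n r r).
  by move=> hr; rewrite /Sset Eunit_tr; apply: L_DD.
have Sup i : (1 <= i < n)%N -> Sset (E n i i.+1).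
  by move=> hi; rewrite /Sset Eunit_tr; apply: L_ei.
have Sdn i : (1 <= i < n)%N -> Sset (E n i.+1 i).
  by move=> hi; rewrite /Sset Eunit_tr; apply: L_fi.
have Hup d r : (1 <= r)%N -> (r + d <= n)%N -> Sset (E n r (r + d)) /\ Sset (E n (r + d) r).
  elim: d => [|d IH] h1 h2'; first by rewrite addn0; split; apply: Sdiag; lia.
  have [IH1 IH2] := IH h1 ltac:(lia).
  split.
    have := S_lie IH1 (Sup (r + d)%N _); rewrite /lie; emul; rewrite subr0 addnS.
    by apply; lia.
  have := S_lie (Sdn (r + d)%N _) IH2; rewrite /lie; emul; rewrite subr0 addnS.
  by apply; lia.
move=> hp hq; case: (leqP p q) => hpq.
  by have [] := Hup (q - p)%N p ltac:(lia) ltac:(lia); rewrite subnKC.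
by have [] := Hup (p - q)%N q ltac:(lia) ltac:(lia); rewrite subnKC //; lia.
Qed.


Lemma dec_all (P : 'M[F]_n -> Prop) :
  P 0 -> (forall c A B, P A -> P B -> P (c *: A + B)) ->
  (forall p q : 'I_n, P (E n p.+1 q.+1)) -> forall A, P A.
Proof.
move=> P0 Plin PE A; rewrite [A]matrix_sum_delta.
have Padd A1 A2 : P A1 -> P A2 -> P (A1 + A2) by move=> hh1 hh2; rewrite -[A1]scale1r; apply: Plin.
apply: big_ind => // p _; apply: big_ind => // q _.
have -> : delta_mx p q = E n p.+1 q.+1.
  by apply/matrixP=> r c; rewrite EunitE mxE !eqSS.
by rewrite -[_ *: _]addr0; apply: Plin.
Qed.

Definition Wf (Y : 'M[F]_n) : V := [ffun k => TR (Y + (a k)^-1 *: Y^T)].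
Definition Wset Y := L (Wf Y).
Definition Vf (Z : 'M[F]_n) : V := [ffun k => BL (Z + a k *: Z^T)].
Definition Vset Z := L (Vf Z).

Lemma lin_aux (c d : F) (Y Y' Yt Yt' : 'M[F]_n) :
  (c *: Y + Y') + d *: (c *: Yt + Yt') = c *: (Y + d *: Yt) + (Y' + d *: Yt').
Proof. by rewrite !scalerDr !scalerA [d * c]mulrC addrACA. Qed.

Lemma W_lin c Y Y' : Wset Y -> Wset Y' -> Wset (c *: Y + Y').
Proof.
move=> h h'; apply: L_eq (L_add (L_scale c h) h').
apply/ffunP=> k; rewrite !ffunE -TR_lin; congr TR.
by rewrite [(_ + _)^T]linearD /= linearZ /= lin_aux scalerDr !scalerA ?[_ * c]mulrC.
Qed.
Lemma V_lin c Y Y' : Vset Y -> Vset Y' -> Vset (c *: Y + Y').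
Proof.
move=> h h'; apply: L_eq (L_add (L_scale c h) h').
apply/ffunP=> k; rewrite !ffunE -BL_lin; congr BL.
by rewrite [(_ + _)^T]linearD /= linearZ /= lin_aux scalerDr !scalerA ?[_ * c]mulrC.
Qed.

Lemma W_S A Y : Sset A -> Wset Y -> Wset (A *m Y + Y *m A^T).
Proof.
move=> hA hY; apply: L_eq (L_br hA hY).
rewrite lK_cst; apply/ffunP=> k; rewrite !ffunE lie_DG_TR; congr TR.
rewrite [(_ + _)^T]linearD /= !trmx_mul trmxK mulmxDr mulmxDl !mulmxN opprD !opprK -scalemxAl -scalemxAr scalerDr addrACA.
by congr (_ + _); rewrite addrC.
Qed.

Lemma V_S A Z : Sset A -> Vset Z -> Vset (- (A^T *m Z + Z *m A)).
Proof.
move=> hA hZ; apply: L_eq (L_br hA hZ).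
rewrite lK_cst; apply/ffunP=> k; rewrite !ffunE lie_DG_BL; congr BL.
rewrite mulmxDr mulmxDl !mulNmx -scalemxAl -scalemxAr trN trD !trmx_mul trmxK scalerN scalerDr.
by rewrite aux4.
Qed.

Lemma W_E p q : (1 <= p <= n)%N -> (1 <= q <= n)%N -> Wset (E n p q).
Proof.
have hn1 : Wset (E n n 1).
  by apply: L_eq L_en; apply/ffunP=> k; rewrite !ffunE Eunit_tr.
have hp1 r : (1 <= r <= n)%N -> Wset (E n r 1).
  move=> hr; have := W_S (S_E (p:=r) (q:=n) hr _) hn1; rewrite Eunit_tr; emul.
  by rewrite addr0; apply; lia.
move=> hp hq; case: (p =P 1%N) => [e1|ne1].
  subst p; have := W_S (S_E (p:=q) (q:=1) hq _) (hp1 1%N hp); rewrite Eunit_tr; emul.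
  move=> /(_ ltac:(lia)) h; have := W_lin (-1) (hp1 q hq) h.
  by rewrite scaleN1r addKr.
have := W_S (S_E (p:=q) (q:=1) hq _) (hp1 p hp); rewrite Eunit_tr; emul.
by rewrite add0r; apply; lia.
Qed.

Lemma V0 : Vset 0.
Proof. by apply: L_eq L_0; apply/ffunP=> k; rewrite !ffunE trmx0 scaler0 addr0 /BL block_mx0. Qed.
Lemma W0 : Wset 0.
Proof. by apply: L_eq L_0; apply/ffunP=> k; rewrite !ffunE trmx0 scaler0 addr0 /TR block_mx0. Qed.
Lemma Vneg X : Vset X -> Vset (- X).
Proof. by move=> h; have := V_lin (-1) h V0; rewrite addr0 scaleN1r. Qed.

Lemma V_E p q : (1 <= p <= n)%N -> (1 <= q <= n)%N -> Vset (E n p q).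
Proof.
have hn1 : Vset (E n 1 n).
  by apply: L_eq L_fn; apply/ffunP=> k; rewrite !ffunE Eunit_tr.
have hp1 r : (1 <= r <= n)%N -> Vset (E n 1 r).
  move=> hr; have := V_S (S_E (p:=n) (q:=r) _ hr) hn1; rewrite Eunit_tr; emul.
  rewrite add0r => /(_ ltac:(lia)) h.
  by have := Vneg h; rewrite opprK.
move=> hp hq; case: (q =P 1%N) => [e1|ne1].
  subst q; have := V_S (S_E (p:=1) (q:=p) _ hp) (hp1 1%N hq); rewrite Eunit_tr; emul.
  move=> /(_ ltac:(lia)) h; have := V_lin (-1) h (Vneg (hp1 p hp)).
  by rewrite scaleN1r opprK addrK.
have := V_S (S_E (p:=1) (q:=p) _ hp) (hp1 q hq); rewrite Eunit_tr; emul.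
rewrite addr0 => /(_ ltac:(lia)) h.
by have := Vneg h; rewrite opprK.
Qed.

Lemma W_all Y : Wset Y.
Proof.
apply: dec_all; [exact: W0 | exact: W_lin |] => p q.
by apply: W_E; have := ltn_ord p; have := ltn_ord q; lia.
Qed.
Lemma V_all Y : Vset Y.
Proof.
apply: dec_all; [exact: V0 | exact: V_lin |] => p q.
by apply: V_E; have := ltn_ord p; have := ltn_ord q; lia.
Qed.



Lemma interp (g x : V) (lam : 'I_K -> F) (i : 'I_K) :
  L g -> L x -> (forall k, lie (g k) (x k) = lam k *: x k) ->
  (forall j, j != i -> lam i - lam j != 0) ->
  L [ffun k => if k == i then x k else 0].
Proof.
move=> hg hx hgx hne.
have step (s : seq 'I_K) :
    L [ffun k => (\prod_(j <- s) ((lam k - lam j) / (lam i - lam j))) *: x k].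
  elim: s => [|j s IH].
    by apply: L_eq hx; apply/ffunP=> k; rewrite ffunE big_nil scale1r.
  apply: L_eq (L_scale (lam i - lam j)^-1 (L_sub (L_br hg IH) (L_scale (lam j) IH))).
  apply/ffunP=> k; rewrite !ffunE big_cons lieZr hgx !scalerA -scalerBl scalerA; congr (_ *: _).
  by ring.
apply: L_eq (step [seq j <- enum 'I_K | j != i]).
apply/ffunP=> k; rewrite !ffunE; case: (k =P i) => [->|hki].
  rewrite big1_seq ?scale1r // => j /andP[_]; rewrite mem_filter => /andP[hj _].
  by rewrite divff //; apply: hne.
set P := \prod_(_ <- _) _; have -> : P = 0; last by rewrite scale0r.
apply/eqP; rewrite prodf_seq_eq0; apply/hasP; exists k.
  by rewrite mem_filter mem_enum andbT; apply/eqP.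
by rewrite /= subrr mul0r eqxx.
Qed.

Definition slot (i : 'I_K) (M : 'M[F]_(n + n)) : V := [ffun k => if k == i then M else 0].
Definition Li i M := L (slot i M).

Lemma Li_lin i c M N : Li i M -> Li i N -> Li i (c *: M + N).
Proof.
move=> hM hN; apply: L_eq (L_add (L_scale c hM) hN).
by apply/ffunP=> k; rewrite !ffunE; case: eqP => // _; rewrite scaler0 addr0.
Qed.
Lemma Li_lie i M N : Li i M -> Li i N -> Li i (lie M N).
Proof.
move=> hM hN; apply: L_eq (L_br hM hN).
by apply/ffunP=> k; rewrite !ffunE; case: eqP => // _; rewrite lie0l.
Qed.
Lemma Li0 i : Li i 0.
Proof. by apply: L_eq L_0; apply/ffunP=> k; rewrite !ffunE; case: eqP. Qed.

Lemma TR_Z c B : TR (c *: B) = c *: TR B.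
Proof. by rewrite -[c *: B]addr0 TR_lin /TR block_mx0 addr0. Qed.
Lemma BL_Z c B : BL (c *: B) = c *: BL B.
Proof. by rewrite -[c *: B]addr0 BL_lin /BL block_mx0 addr0. Qed.

Lemma addZ1 (c : F) : 1%:M + c *: 1%:M = (1 + c) *: (1%:M : 'M[F]_n).
Proof. by rewrite scalerDl scale1r. Qed.

Definition mu k := (1 + (a k)^-1) * (1 + a k).
Definition Hel : V := lK (Wf 1%:M) (Vf 1%:M).

Lemma Hel_k k : Hel k = DG (mu k *: 1%:M) (- (mu k *: 1%:M)).
Proof.
rewrite /Hel !ffunE lie_TR_BL trmx1 !addZ1 -!scalemxAl -!scalemxAr !mulmx1 !scalerA.
by rewrite /mu [(1 + a k) * _]mulrC.
Qed.

Lemma Hel_W k Y : lie (Hel k) (Wf Y k) = (2 * mu k) *: Wf Y k.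
Proof.
rewrite Hel_k ffunE lie_DG_TR mulmxN -scalemxAl -scalemxAr mul1mx mulmx1 opprK.
by rewrite -scalerDl -TR_Z mulr_natl mulr2n.
Qed.


Lemma Hel_V k Y : lie (Hel k) (Vf Y k) = (- (2 * mu k)) *: Vf Y k.
Proof.
rewrite Hel_k ffunE lie_DG_BL mulNmx -scalemxAl -scalemxAr mul1mx mulmx1.
by rewrite -opprD -scalerDl -scaleNr BL_Z mulr_natl mulr2n.
Qed.

Lemma L_Hel : L Hel.
Proof. exact: L_br (W_all _) (V_all _). Qed.

Hypothesis hdist : forall k j : 'I_K, k != j -> a k != a j /\ a k != (a j)^-1.

Lemma mu_ne i j : j != i -> mu i - mu j != 0.
Proof.
move=> hji; have [h1 h3] := hdist hji.
have e : (a j - a i) * (a j * a i - 1) = - (a j * a i * (mu i - mu j)).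
  by rewrite /mu; field; apply/andP; split; apply: ha0.
apply/negP => /eqP h; move: e; rewrite h mulr0 oppr0 => /eqP; rewrite mulf_eq0 => /orP[].
  by rewrite subr_eq0; apply/negP.
rewrite subr_eq0 => /eqP e.
have e' : a j = (a i)^-1 by rewrite -[a j](mulfK (ha0 i)) e mul1r.
by rewrite e' eqxx in h3.
Qed.

Lemma slot_TR i Y : Li i (TR (Y + (a i)^-1 *: Y^T)).
Proof.
have := interp (x := Wf Y) (lam := fun k => 2 * mu k) (i:=i) L_Hel (W_all Y) (@Hel_W ^~ Y) _.
move=> /(_ _) h; apply: L_eq (h _).
  by apply/ffunP=> k; rewrite !ffunE; case: eqP => [->|].
by move=> j hj; rewrite -mulrBr mulf_neq0 // mu_ne.
Qed.

Lemma slot_BL i Y : Li i (BL (Y + a i *: Y^T)).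
Proof.
have := interp (x := Vf Y) (lam := fun k => - (2 * mu k)) (i:=i) L_Hel (V_all Y) (@Hel_V ^~ Y) _.
move=> /(_ _) h; apply: L_eq (h _).
  by apply/ffunP=> k; rewrite !ffunE; case: eqP => [->|].
by move=> j hj; rewrite opprK addrC -mulrBr mulf_neq0 // mu_ne // eq_sym.
Qed.


Lemma dec_sl (P : 'M[F]_n -> Prop) :
  P 0 -> (forall c A B, P A -> P B -> P (c *: A + B)) ->
  (forall p q : 'I_n, P (E n p.+1 q.+1 - (p == q)%:R *: E n 1 1)) ->
  forall N, \tr N = 0 -> P N.
Proof.
move=> P0 Plin PE N hN.
have Padd A1 A2 : P A1 -> P A2 -> P (A1 + A2) by move=> hh1 hh2; rewrite -[A1]scale1r; apply: Plin.
have -> : N = \sum_p \sum_q N p q *: (E n p.+1 q.+1 - (p == q)%:R *: E n 1 1).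
  have eE p q : delta_mx p q = E n p.+1 q.+1.
    by apply/matrixP=> r c; rewrite EunitE mxE !eqSS.
  under eq_bigr => p _ do under eq_bigr => q _ do rewrite scalerBr.
  under eq_bigr => p _ do rewrite sumrB.
  rewrite sumrB.
  have -> : \sum_p \sum_q N p q *: E n p.+1 q.+1 = N.
    by rewrite [RHS]matrix_sum_delta; apply: eq_bigr => p _; apply: eq_bigr => q _; rewrite eE.
  have -> : \sum_p \sum_q N p q *: ((p == q)%:R *: E n 1 1) = 0.
    rewrite -[RHS](scale0r (E n 1 1)) -hN /mxtrace scaler_suml; apply: eq_bigr => p _.
    rewrite (bigD1 p) //= eqxx scale1r big1 ?addr0 // => q /negbTE.
    by rewrite eq_sym => ->; rewrite !scale0r scaler0.
  by rewrite subr0.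
apply: big_ind => // p _; apply: big_ind => // q _.
by rewrite -[_ *: _]addr0; apply: Plin.
Qed.

Lemma solve_sym (s c : F) (B : 'M[F]_n) : s * (1 - c ^+ 2) = 1 ->
  B = s *: (B - c *: B^T) + c *: (s *: (B - c *: B^T))^T.
Proof.
move=> hs; apply/matrixP=> r q; rewrite !mxE -[LHS]mul1r -hs; ring.
Qed.

Section Slots.
Variable i : 'I_K.

Lemma Li_TR_gen B : a i != 1 -> a i != -1 -> Li i (TR B).
Proof.
move=> h1 hm1; set c := (a i)^-1.
have hc : 1 - c ^+ 2 != 0.
  rewrite subr_eq0 eq_sym sqrf_eq1; apply/negP => /orP[] /eqP e.
    by move: h1; rewrite -[a i]invrK -/c e invr1 eqxx.
  by move: hm1; rewrite -[a i]invrK -/c e invrN invr1 eqxx.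
set Y := (1 - c ^+ 2)^-1 *: (B - c *: B^T).
have -> : B = Y + c *: Y^T.
  by apply: solve_sym; rewrite mulVf.
exact: slot_TR.
Qed.
Lemma Li_BL_gen C : a i != 1 -> a i != -1 -> Li i (BL C).
Proof.
move=> h1 hm1; set c := a i.
have hc : 1 - c ^+ 2 != 0.
  by rewrite subr_eq0 eq_sym sqrf_eq1; apply/negP => /orP[] /eqP e; [move: h1|move: hm1]; rewrite -/c e eqxx.
set Y := (1 - c ^+ 2)^-1 *: (C - c *: C^T).
have -> : C = Y + c *: Y^T.
  by apply: solve_sym; rewrite mulVf.
exact: slot_BL.
Qed.

Lemma Li_add M N : Li i M -> Li i N -> Li i (M + N).
Proof. by move=> h h'; rewrite -[M]scale1r; apply: Li_lin. Qed.

Lemma Li_sl M : a i != 1 -> a i != -1 -> \tr M = 0 -> Li i M.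
Proof.
move=> h1 hm1 htr.
have hDG B C : Li i (DG (B *m C) (- (C *m B))).
  by rewrite -lie_TR_BL; apply: Li_lie; [apply: Li_TR_gen|apply: Li_BL_gen].
move: htr; rewrite -[M]submxK mxtrace_block block_split.
set A := ulsubmx M; set D := drsubmx M => htr.
apply: Li_add; first by apply: Li_add; [apply: Li_TR_gen|apply: Li_BL_gen].
have -> : DG A D = DG A (- A) + DG 0 (D + A) by rewrite /DG add_block_mx !addr0 [D + A]addrC addKr.
apply: Li_add; first by have := hDG A 1%:M; rewrite mulmx1 mul1mx.
have htr' : \tr (D + A) = 0 by rewrite mxtraceD addrC.
move: htr'; apply: (@dec_sl (fun N => Li i (DG 0 N))).
- by rewrite /DG block_mx0; apply: Li0.
- move=> c X Y hX hY.
  have -> : DG 0 (c *: X + Y) = c *: DG 0 X + DG 0 Y by rewrite -DG_lin scaler0 addr0.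
  by apply: Li_lin.
move=> p q; have hp := ltn_ord p; have hq := ltn_ord q; case: (p =P q) => [<-|hpq].
  have := Li_lin (-1) (hDG (E n 1 p.+1) (E n p.+1 1)) (hDG (E n 1 1) (E n 1 1)).
  emul; apply: L_eq; congr slot; rewrite /DG scale_block_mx add_block_mx !scaler0 addr0.
  congr block_mx; first by rewrite scaleN1r addNr.
  by rewrite scaleN1r opprK /= scale1r.
have hpq' : (p : nat) <> q by move=> e; apply: hpq; apply: val_inj.
rewrite /= scale0r subr0.
have := hDG (- E n q.+1 q.+1) (E n p.+1 q.+1); rewrite !mulNmx !mulmxN opprK; emul.
by rewrite oppr0.
Qed.

Lemma half_sym (S : 'M[F]_n) : S^T = S -> S = 2^-1 *: S + (2^-1 *: S)^T.
Proof.
move=> hS; rewrite trZ hS -scalerDl.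
have -> : (2:F)^-1 + 2^-1 = 1 by field.
by rewrite scale1r.
Qed.

Lemma Li_TRsym S : a i = 1 -> S^T = S -> Li i (TR S).
Proof.
move=> h1 hS; have := slot_TR i (2^-1 *: S); rewrite h1 invr1 scale1r.
by rewrite -half_sym.
Qed.
Lemma Li_BLsym S : a i = 1 -> S^T = S -> Li i (BL S).
Proof.
move=> h1 hS; have := slot_BL i (2^-1 *: S); rewrite h1 scale1r.
by rewrite -half_sym.
Qed.

Lemma Li_sp M : a i = 1 -> is_sp M -> Li i M.
Proof.
move=> h1; rewrite -[M]submxK => /is_sp_blockE [hB hC hD]; rewrite block_split hD.
apply: Li_add; first by apply: Li_add; [apply: Li_TRsym|apply: Li_BLsym].
have hDG B C : B^T = B -> C^T = C -> Li i (DG (B *m C) (- (C *m B))).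
  by move=> hB' hC'; rewrite -lie_TR_BL; apply: Li_lie; [apply: Li_TRsym|apply: Li_BLsym].
apply: (@dec_all (fun A => Li i (DG A (- A^T)))).
- by rewrite trmx0 oppr0 /DG block_mx0; apply: Li0.
- move=> c X Y hX hY.
  have -> : DG (c *: X + Y) (- (c *: X + Y)^T) = c *: DG X (- X^T) + DG Y (- Y^T).
    by rewrite -DG_lin trD trZ opprD scalerN.
  by apply: Li_lin.
move=> p q; have hp := ltn_ord p; have hq := ltn_ord q; rewrite Eunit_tr.
case: (p =P q) => [<-|hpq].
  by have := hDG (E n p.+1 p.+1) (E n p.+1 p.+1) (Eunit_tr _ _ _ _) (Eunit_tr _ _ _ _); emul.
have hpq' : (p : nat) <> q by move=> e; apply: hpq; apply: val_inj.
have := hDG (E n p.+1 p.+1) (E n p.+1 q.+1 + E n q.+1 p.+1) (Eunit_tr _ _ _ _).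
rewrite trD !Eunit_tr addrC => /(_ erefl).
by rewrite mulmxDr mulmxDl; emul; rewrite addr0 add0r.
Qed.

End Slots.


Lemma trN' m (X : 'M[F]_m) : \tr (- X) = - \tr X.
Proof. by rewrite -scaleN1r mxtraceZ mulN1r. Qed.

Lemma sl_DG (A : 'M[F]_n) : is_sl (DG A (- A^T)).
Proof. by rewrite /is_sl mxtrace_block trN' mxtrace_tr subrr. Qed.
Lemma sl_TR (B : 'M[F]_n) : is_sl (TR B).
Proof. by rewrite /is_sl mxtrace_block mxtrace0 addr0. Qed.
Lemma sl_BL (B : 'M[F]_n) : is_sl (BL B).
Proof. by rewrite /is_sl mxtrace_block mxtrace0 addr0. Qed.
Lemma sp_DG (A : 'M[F]_n) : is_sp (DG A (- A^T)).
Proof. by apply: is_sp_block; rewrite ?trmx0. Qed.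

Lemma gen_sl (b : F) i : (1 <= i <= n)%N -> is_sl (psi_e n b i) /\ is_sl (psi_f n b i).
Proof.
move=> hi; case: (i =P n) => [->|hin].
  by rewrite psi_e_n ?psi_f_n; [split; [apply: sl_TR|apply: sl_BL]| lia| lia].
rewrite psi_e_lt ?psi_f_lt; try lia.
by split; [rewrite -[E n i.+1 i]Eunit_tr | rewrite -[E n i i.+1]Eunit_tr]; apply: sl_DG.
Qed.

Lemma gen_sp i : (1 <= i <= n)%N -> is_sp (psi_e n (1 : F) i) /\ is_sp (psi_f n (1 : F) i).
Proof.
move=> hi; case: (i =P n) => [->|hin].
  rewrite psi_e_n ?psi_f_n; try lia.
  rewrite invr1 !scale1r /TR /BL; split; apply: is_sp_block; rewrite ?trmx0 ?oppr0 //.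
    by rewrite trD !Eunit_tr addrC.
  by rewrite trD !Eunit_tr addrC.
rewrite psi_e_lt ?psi_f_lt; try lia.
by split; [rewrite -[E n i.+1 i]Eunit_tr | rewrite -[E n i i.+1]Eunit_tr]; apply: sp_DG.
Qed.

Lemma L_target k0 : a k0 = 1 -> forall x, L x -> is_sp (x k0) /\ forall k, is_sl (x k).
Proof.
move=> hk0 x; elim => {x}.
- move=> x [i hi [] ->]; rewrite !ffunE ?hk0.
  + by split; [have [] := gen_sp hi | move=> k; rewrite ffunE; have [] := gen_sl (a k) hi].
  + by split; [have [] := gen_sp hi | move=> k; rewrite ffunE; have [] := gen_sl (a k) hi].
  + split; first by rewrite /psi_h; have [] := gen_sp hi; apply: is_sp_lie.
    by move=> k; rewrite ffunE /psi_h; apply: is_sl_lie.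
- split; first by rewrite ffunE /is_sp trmx0 mul0mx mulmx0 addr0.
  by move=> k; rewrite ffunE /is_sl mxtrace0.
- move=> x y _ [hx1 hx2] _ [hy1 hy2]; rewrite ffunE; split.
    by rewrite -[x k0]scale1r; apply: is_sp_lin.
  by move=> k; rewrite ffunE -[x k]scale1r; apply: is_sl_lin.
- move=> c x _ [hx1 hx2]; rewrite ffunE; split.
    have := is_sp_lin c hx1 (_ : is_sp 0); rewrite addr0; apply.
    by rewrite /is_sp trmx0 mul0mx mulmx0 addr0.
  move=> k; rewrite ffunE; have := is_sl_lin c (hx2 k) (_ : is_sl 0); rewrite addr0; apply.
  by rewrite /is_sl mxtrace0.
- move=> x y _ [hx1 hx2] _ [hy1 hy2]; rewrite /lieK ffunE; split; first exact: is_sp_lie.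
  by move=> k; rewrite ffunE; apply: is_sl_lie.
Qed.


Lemma nxt_proof (k : 'I_K.-1) : (k.+1 < K)%N.
Proof. have := ltn_ord k; lia. Qed.
Definition nxt (k : 'I_K.-1) : 'I_K := Ordinal (nxt_proof k).

Lemma main_gen (hK : (1 <= K)%N) :
  (forall k : 'I_K, val k = 0%N -> a k = 1) ->
  (forall k : 'I_K, val k != 0%N -> a k != -1) ->
  lie_iso (@lieK F K (n + n)) (@lie_sum F n K) L (@sp_sl_sum F n K).
Proof.
move=> h1 hm1; pose k0 : 'I_K := Ordinal hK.
have hk0 : a k0 = 1 by apply: h1.
have nxt_ne k : nxt k != k0 by [].
have nxt_inj : injective nxt by move=> k k' /(congr1 val) /= [] e; apply: val_inj.
exists (fun x : V => (x k0, [ffun k => x (nxt k)])); split.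
- move=> x /(L_target hk0) [hx1 hx2]; split => //= k; rewrite ffunE; exact: hx2.
- move=> c x y _ _; congr (_, _); first by rewrite !ffunE.
  by apply/ffunP=> k; rewrite !ffunE.
- move=> x y _ _; rewrite /lie_sum /=; congr (_, _); first by rewrite ffunE.
  by apply/ffunP=> k; rewrite !ffunE.
- move=> x y _ _ [e0 e1]; apply/ffunP=> k.
  case: (val k =P 0%N) => hk.
    by have -> : k = k0 by apply: val_inj.
  have hk' : (k.-1 < K.-1)%N by move: hk (ltn_ord k) => /=; lia.
  have -> : k = nxt (Ordinal hk') by apply: val_inj => /=; move: hk => /=; lia.
  by move/ffunP: e1 => /(_ (Ordinal hk')); rewrite !ffunE.
move=> [z1 z2] [/= hz1 hz2].
exists (slot k0 z1 + \sum_(k : 'I_K.-1) slot (nxt k) (z2 k)).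
  apply: L_add; first by apply: Li_sp.
  apply: L_sum => k _; apply: Li_sl; [|by apply: hm1|exact: hz2].
  by rewrite -hk0; have [] := hdist (nxt_ne k).
congr (_, _).
  rewrite !ffunE eqxx sum_ffunE big1 ?addr0 // => k _.
  by rewrite ffunE eq_sym (negbTE (nxt_ne k)).
apply/ffunP=> j; rewrite !ffunE sum_ffunE (bigD1 j) //= ffunE eqxx big1 ?addr0.
  by rewrite add0r.
move=> k hkj; rewrite ffunE; case: eqP => // /nxt_inj e.
by rewrite e eqxx in hkj.
Qed.

End Gen.


Unset Implicit Arguments.

Theorem lemma5p2 (R : realType) (n K : nat) (a : 'I_K -> R[i]) :
  (3 <= n)%N -> (1 <= K)%N ->
  (forall k, a k != 0) ->
  (forall k j : 'I_K, k != j -> a k != a j /\ a k != (a j)^-1) ->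
  (forall k : 'I_K, val k = 0%N -> a k = 1) ->
  (forall k : 'I_K, val k != 0%N -> a k != -1) ->
  lie_iso (@lieK _ K (n + n)) (@lie_sum _ n K)
    (@psiK_image _ n K a) (@sp_sl_sum _ n K).
Proof.
move=> hn hK ha0 hdist h1 hm1.
apply: (main_gen hn ha0 _ hdist hK h1 hm1).
by rewrite pnatr_eq0.
Qed.
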